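(* Let $G$ be a maximal triangle-free graph satisfying property $\mathscr{D}_3$. If $G$ contains an induced cycle of length six, then $G$ contains the Mycielski–Grötzsch graph $\Upsilon$ as a subgraph.
   Context: A graph is maximal triangle-free if it contains no triangle but adding any new edge creates a triangle. Property $\mathscr{D}_k$: for every $m\in\{1,\dots,k\}$ and every sequence $x_1,\dots,x_{3m}$ of (not necessarily distinct) vertices there is a vertex $y$ with $|\{i\in[3m]: x_iy\in E(G)\}|\ge m+1$. Mycielski–Grötzsch graph $\Upsilon$: vertices $a_j,b_j$ ($j\in\mathbb Z/5\mathbb Z$) and $c$; edges all pairs $a_jc$, $a_jb_{j\pm2}$, $b_jb_{j+2}$. *)

(* Defs.v *)
From mathcomp Require Import all_boot.
Set Implicit Arguments. Unset Strict Implicit. Unset Printing Implicit Defensive.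

Definition simple_graph (T : finType) (e : rel T) : Prop :=
  symmetric e /\ irreflexive e.

Definition triangle_free (T : finType) (e : rel T) : Prop :=
  forall x y z : T, ~ [&& e x y, e y z & e x z].

Definition maximal_triangle_free (T : finType) (e : rel T) : Prop :=
  triangle_free e /\
  forall x y : T, x != y -> ~~ e x y -> exists z : T, e x z && e z y.

Definition property_D (k : nat) (T : finType) (e : rel T) : Prop :=
  forall m : nat, 1 <= m <= k ->
  forall x : 'I_(3 * m) -> T,
  exists y : T, m.+1 <= #|[set i : 'I_(3 * m) | e (x i) y]|.

Definition has_induced_C6 (T : finType) (e : rel T) : Prop :=
  exists f : 'I_6 -> T, injective f /\
    forall i j : 'I_6,
      e (f i) (f j) = (val j == (val i).+1 %% 6) || (val i == (val j).+1 %% 6).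

(* The Mycielski–Grötzsch graph Upsilon.
   Vertices: Some (inl j) = a_j, Some (inr j) = b_j (j in Z/5Z), None = c.
   Edges: a_j c, a_j b_{j±2}, b_j b_{j+2}. *)
Definition upsilon_vertex : finType := option ('I_5 + 'I_5).

Definition plus2 (j k : 'I_5) : bool := val k == (val j + 2) %% 5.

Definition upsilon_edge (u v : upsilon_vertex) : bool :=
  match u, v with
  | Some (inl _), None => true
  | None, Some (inl _) => true
  | Some (inl j), Some (inr k) => plus2 j k || plus2 k j
  | Some (inr k), Some (inl j) => plus2 j k || plus2 k j
  | Some (inr j), Some (inr k) => plus2 j k || plus2 k j
  | _, _ => false
  end.

Definition contains_subgraph (U : finType) (eH : rel U) (T : finType) (e : rel T) : Prop :=
  exists f : U -> T, injective f /\ forall u v : U, eH u v -> e (f u) (f v).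

(* Main.v *)
Require Import Defs.
From mathcomp Require Import all_boot.
Set Implicit Arguments. Unset Strict Implicit. Unset Printing Implicit Defensive.

Lemma tri_ab_ac (T : finType) (e : rel T) : symmetric e -> triangle_free e ->
  forall a b c, e a b -> e a c -> e b c -> False.
Proof. move=> sym tri a b c Hab Hac Hbc; apply: (tri a b c); by rewrite Hab Hbc Hac. Qed.
Lemma tri_ab_ca (T : finType) (e : rel T) : symmetric e -> triangle_free e ->
  forall a b c, e a b -> e c a -> e b c -> False.
Proof. move=> sym tri a b c Hab Hac Hbc; apply: (tri_ab_ac sym tri Hab _ Hbc); by rewrite sym. Qed.
Lemma tri_ba_ac (T : finType) (e : rel T) : symmetric e -> triangle_free e ->
  forall a b c, e b a -> e a c -> e b c -> False.
Proof. move=> sym tri a b c Hab Hac Hbc; apply: (tri_ab_ac sym tri _ Hac Hbc); by rewrite sym. Qed.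
Lemma tri_ba_ca (T : finType) (e : rel T) : symmetric e -> triangle_free e ->
  forall a b c, e b a -> e c a -> e b c -> False.
Proof. move=> sym tri a b c Hab Hac Hbc; apply: (@tri_ab_ac T e sym tri a b c _ _ Hbc); by rewrite sym. Qed.

Ltac close_e sym := first [done | (rewrite sym; done)].

Ltac trik e sym tri := match goal with
| H1 : is_true (e ?a ?b), H2 : is_true (e ?a ?c) |- _ =>
   exfalso; apply: (tri_ab_ac sym tri H1 H2); close_e sym
| H1 : is_true (e ?a ?b), H2 : is_true (e ?c ?a) |- _ =>
   exfalso; apply: (tri_ab_ca sym tri H1 H2); close_e sym
| H1 : is_true (e ?b ?a), H2 : is_true (e ?a ?c) |- _ =>
   exfalso; apply: (tri_ba_ac sym tri H1 H2); close_e sym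
| H1 : is_true (e ?b ?a), H2 : is_true (e ?c ?a) |- _ =>
   exfalso; apply: (tri_ba_ca sym tri H1 H2); close_e sym
end.

Definition upsf (T : Type) (c a0 a1 a2 a3 a4 b0 b1 b2 b3 b4 : T) (u : upsilon_vertex) : T :=
  match u with
  | None => c
  | Some (inl j) => match val j with 0 => a0 | 1 => a1 | 2 => a2 | 3 => a3 | _ => a4 end
  | Some (inr j) => match val j with 0 => b0 | 1 => b1 | 2 => b2 | 3 => b3 | _ => b4 end
  end.

Lemma embed (T : finType) (e : rel T) (v0 v1 v2 v3 v4 v5 y x a b x' : T) :
  symmetric e -> irreflexive e -> triangle_free e ->
  e v0 v1 -> e v1 v2 -> e v2 v3 -> e v3 v4 -> e v4 v5 -> e v5 v0 ->
  e v0 y -> e v2 y -> e v4 y ->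
  e v0 x -> e v3 x -> e v0 x' -> e v3 x' ->
  e v1 a -> e v4 a -> e v2 b -> e v5 b ->
  e x a -> e a b -> e b x' ->
  contains_subgraph upsilon_edge e.
Proof.
move=> sym irr tri E01 E12 E23 E34 E45 E50 Y0 Y2 Y4 X0 X3 X'0 X'3 A1 A4 B2 B5 Xa Ab Bx.
exists (upsf v0 y v1 x x' v5 v3 b v4 v2 a); split.
  move=> u w.
  case: u => [[[[|[|[|[|[|j]]]]] Hj]|[[|[|[|[|[|j]]]]] Hj]]|] //;
  case: w => [[[[|[|[|[|[|k]]]]] Hk]|[[|[|[|[|[|k]]]]] Hk]]|] //= E;
  try (by congr Some; congr inl; apply: val_inj);
  try (by congr Some; congr inr; apply: val_inj);
  subst; try (by rewrite irr in * ); trik e sym tri.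
move=> u w.
case: u => [[[[|[|[|[|[|j]]]]] Hj]|[[|[|[|[|[|j]]]]] Hj]]|] //;
case: w => [[[[|[|[|[|[|k]]]]] Hk]|[[|[|[|[|[|k]]]]] Hk]]|] //= _; close_e sym.
Qed.

Ltac split_all e :=
  repeat match goal with |- context [e ?a ?b] =>
    let H := fresh "H" in case H: (e a b);
    try (change (is_true (e a b)) in H) end.

Ltac bash e sym tri := split_all e; try done; trik e sym tri.

Lemma c6wit (T : finType) (e : rel T) (v0 v1 v2 v3 v4 v5 y : T) :
  symmetric e -> triangle_free e ->
  e v0 v1 -> e v1 v2 -> e v2 v3 -> e v3 v4 -> e v4 v5 -> e v5 v0 ->
  3 <= count (fun a => e a y) [:: v0; v1; v2; v3; v4; v5] ->
  (e v0 y && e v2 y && e v4 y) || (e v1 y && e v3 y && e v5 y).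
Proof.
move=> sym tri E01 E12 E23 E34 E45 E50 /=; bash e sym tri.
Qed.

Lemma L1w (T : finType) (e : rel T) (p r q s zp zq w : T) :
  symmetric e -> triangle_free e ->
  e p q -> e r s -> e p zp -> e r zp -> e q zq -> e s zq ->
  3 <= count (fun a => e a w) [:: p; r; q; s; zp; zq] ->
  (e q w && e s w && e zp w) || (e p w && e r w && e zq w).
Proof.
move=> sym tri Epq Ers Pp Pr Qq Qs /=; bash e sym tri.
Qed.

Lemma L2w (T : finType) (e : rel T) (v0 v1 v2 v3 v4 v5 z0 z1 z2 w : T) :
  symmetric e -> triangle_free e ->
  e v0 v1 -> e v1 v2 -> e v2 v3 -> e v3 v4 -> e v4 v5 -> e v5 v0 ->
  e v0 z0 -> e v3 z0 -> e v1 z1 -> e v4 z1 -> e v2 z2 -> e v5 z2 ->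
  4 <= count (fun a => e a w) [:: v0; v1; v2; v3; v4; v5; z0; z1; z2] ->
  [&& e v0 w, e v3 w, e z1 w & e z2 w] || [&& e v1 w, e v4 w, e z0 w & e z2 w]
  || [&& e v2 w, e v5 w, e z0 w & e z1 w].
Proof.
move=> sym tri E01 E12 E23 E34 E45 E50 Z00 Z03 Z11 Z14 Z22 Z25 /=; bash e sym tri.
Qed.

Lemma D_list (T : finType) (e : rel T) (m : nat) (s : seq T) (x0 : T) :
  property_D 3 e -> 1 <= m <= 3 -> size s = 3 * m ->
  exists y, m.+1 <= count (fun a => e a y) s.
Proof.
move=> HD Hm Hs; have [y Hy] := HD m Hm (fun i => nth x0 s i).
exists y; move: Hy; rewrite -sum1dep_card.
rewrite -(big_mkord (fun i => e (nth x0 s i) y) (fun _ => 1)) -Hs.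
by rewrite -(big_nth x0 (fun a => e a y) (fun _ => 1)) sum1_count.
Qed.

Lemma step2 (T : finType) (e : rel T) (v0 v1 v2 v3 v4 v5 y w z1 z2 : T) :
  symmetric e -> irreflexive e -> triangle_free e -> property_D 3 e ->
  e v0 v1 -> e v1 v2 -> e v2 v3 -> e v3 v4 -> e v4 v5 -> e v5 v0 ->
  e v0 y -> e v2 y -> e v4 y ->
  e v0 w -> e v3 w -> e v1 z1 -> e v4 z1 -> e v2 z2 -> e v5 z2 ->
  e z1 w -> e z2 w ->
  contains_subgraph upsilon_edge e.
Proof.
move=> sym irr tri HD E01 E12 E23 E34 E45 E50 Y0 Y2 Y4 W0 W3 Z11 Z14 Z22 Z25 Z1w Z2w.
have [u Hu] := D_list (m := 2) (s := [:: v1; v4; v2; v5; z1; z2]) v0 HD isT erefl.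
case/orP: (L1w sym tri E12 E45 Z11 Z14 Z22 Z25 Hu) => /andP [/andP [H1 H2] H3].
  by apply: (@embed T e v2 v3 v4 v5 v0 v1 y z2 w z1 u sym irr tri); close_e sym.
by apply: (@embed T e v4 v5 v0 v1 v2 v3 y u z2 w z1 sym irr tri); close_e sym.
Qed.

Lemma core (T : finType) (e : rel T) (v0 v1 v2 v3 v4 v5 y : T) :
  symmetric e -> irreflexive e -> maximal_triangle_free e -> property_D 3 e ->
  e v0 v1 -> e v1 v2 -> e v2 v3 -> e v3 v4 -> e v4 v5 -> e v5 v0 ->
  ~~ e v0 v3 -> ~~ e v1 v4 -> ~~ e v2 v5 -> ~~ e v1 v3 -> ~~ e v2 v4 -> ~~ e v3 v5 ->
  e v0 y -> e v2 y -> e v4 y ->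
  contains_subgraph upsilon_edge e.
Proof.
move=> sym irr [tri max] HD E01 E12 E23 E34 E45 E50 N03 N14 N25 N13 N24 N35 Y0 Y2 Y4.
have d03 : v0 != v3 by apply/eqP => H; move: N13; rewrite -H sym E01.
have d14 : v1 != v4 by apply/eqP => H; move: N24; rewrite -H sym E12.
have d25 : v2 != v5 by apply/eqP => H; move: N35; rewrite -H sym E23.
have [z0 /andP [Z00 Z03]] := max v0 v3 d03 N03.
have [z1 /andP [Z11 Z14]] := max v1 v4 d14 N14.
have [z2 /andP [Z22 Z25]] := max v2 v5 d25 N25.
rewrite sym in Z03; rewrite sym in Z14; rewrite sym in Z25.
have [w Hw] := D_list (m := 3) (s := [:: v0; v1; v2; v3; v4; v5; z0; z1; z2]) v0 HD isT erefl.
case/orP: (L2w sym tri E01 E12 E23 E34 E45 E50 Z00 Z03 Z11 Z14 Z22 Z25 Hw) => [/orP [] | ] /and4P [H1 H2 H3 H4].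
- by apply: (@step2 T e v0 v1 v2 v3 v4 v5 y w z1 z2 sym irr tri HD); close_e sym.
- by apply: (@step2 T e v4 v5 v0 v1 v2 v3 y w z2 z0 sym irr tri HD); close_e sym.
- by apply: (@step2 T e v2 v3 v4 v5 v0 v1 y w z0 z1 sym irr tri HD); close_e sym.
Qed.

Theorem lemma3p1 (T : finType) (e : rel T) :
  simple_graph e ->
  maximal_triangle_free e ->
  property_D 3 e ->
  has_induced_C6 e ->
  contains_subgraph upsilon_edge e.
Proof.
move=> [sym irr] Hmax HD [f [finj Hf]].
have tri := Hmax.1.
pose v0 := f (@Ordinal 6 0 isT); pose v1 := f (@Ordinal 6 1 isT);
pose v2 := f (@Ordinal 6 2 isT); pose v3 := f (@Ordinal 6 3 isT);
pose v4 := f (@Ordinal 6 4 isT); pose v5 := f (@Ordinal 6 5 isT).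
have E01 : e v0 v1 by rewrite /v0 /v1 Hf.
have E12 : e v1 v2 by rewrite /v1 /v2 Hf.
have E23 : e v2 v3 by rewrite /v2 /v3 Hf.
have E34 : e v3 v4 by rewrite /v3 /v4 Hf.
have E45 : e v4 v5 by rewrite /v4 /v5 Hf.
have E50 : e v5 v0 by rewrite /v5 /v0 Hf.
have [y Hy] := D_list (m := 2) (s := [:: v0; v1; v2; v3; v4; v5]) v0 HD isT erefl.
case/orP: (c6wit sym tri E01 E12 E23 E34 E45 E50 Hy) => /andP [/andP [Y0 Y2] Y4].
  apply: (@core T e v0 v1 v2 v3 v4 v5 y sym irr Hmax HD) => //;
  by rewrite /v0 /v1 /v2 /v3 /v4 /v5 Hf.
apply: (@core T e v1 v2 v3 v4 v5 v0 y sym irr Hmax HD) => //;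
by rewrite /v0 /v1 /v2 /v3 /v4 /v5 Hf.
Qed.
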